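(* Under the standing assumptions below, if $x$ is sufficiently large (in terms of $\epsilon$), then $U+V\subseteq Q$, where the sum is taken modulo $36$.
   Context: Standing assumptions and notation: $\epsilon>0$ is fixed, $\delta_0=\frac14-\frac{2}{\pi^2}$, and $A\subseteq[1,x]\cap\mathbb{N}$ is a set with $|A|>(\delta_0+\epsilon)x$ such that $A+A=\{a+b:a,b\in A\}$ contains no squarefree integer, and $A$ is not a subset of $4\mathbb{N}$, nor of $9\mathbb{N}$, nor of $\{n\in\mathbb{N}:n\equiv 2\pmod 4\}$. For $a\in\{0,\dots,35\}$ put $\delta_a=\frac{36\cdot\#\{n\in A: n\equiv a\pmod{36}\}}{x}$. Let $U$ be the set of residues $a\bmod 36$ with $\delta_a>1-\frac{9}{\pi^2}+\epsilon/100$, let $V$ be the set of residues $a\bmod 36$ with $\delta_a>0$, and let $Q=\{0,4,8,9,12,16,18,20,24,27,28,32\}$ (the residue classes mod $36$ containing no squarefree integers). *)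

(* Defs.v *)
From Stdlib Require Export Reals Lra Lia ZArith Arith List.
Open Scope R_scope.

Definition delta0 : R := / 4 - 2 / (PI ^ 2).

Definition squarefree (n : nat) : Prop :=
  (0 < n)%nat /\ forall d : nat, Nat.divide (d * d) n -> d = 1%nat.

Definition subset_1x (A : nat -> bool) (x : R) : Prop :=
  forall n : nat, A n = true -> (1 <= n)%nat /\ INR n <= x.

(* For A ⊆ [1,x], every element is < up x, so this list covers A. *)
Definition range_upto (x : R) : list nat := seq 0 (Z.to_nat (up x)).

Definition cardA (A : nat -> bool) (x : R) : nat :=
  length (filter A (range_upto x)).

Definition count_res (A : nat -> bool) (x : R) (a : nat) : nat :=
  length (filter (fun n => andb (A n) (Nat.eqb (n mod 36) a)) (range_upto x)).

Definition delta_res (A : nat -> bool) (x : R) (a : nat) : R :=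
  36 * INR (count_res A x a) / x.

(* Q: residues mod 36 containing no squarefree integers. *)
Definition Qset : list nat := (0 :: 4 :: 8 :: 9 :: 12 :: 16 :: 18 :: 20 :: 24 :: 27 :: 28 :: 32 :: nil)%nat.

Definition inU (A : nat -> bool) (x eps : R) (a : nat) : Prop :=
  (a < 36)%nat /\ delta_res A x a > 1 - 9 / (PI ^ 2) + eps / 100.

Definition inV (A : nat -> bool) (x : R) (a : nat) : Prop :=
  (a < 36)%nat /\ delta_res A x a > 0.

(* Main.v *)
Require Import Defs.
From Stdlib Require Import Reals Lra Lia ZArith Arith List Classical Bool Nsatz.
From Coquelicot Require Import Coquelicot.
Open Scope R_scope.


Lemma bd1 (n : nat) (x : R) : is_derive (fun x => cos x ^ (S (2*n)) * sin x) x
   ((2 * INR n + 2) * (cos x ^ (2*n) * cos x * cos x) - (2 * INR n + 1) * cos x ^ (2*n)).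
Proof.
  auto_derive. 1: exact I.
  change (match (n + (n + 0))%nat with | 0%nat => 1 | S _ => INR (n + (n + 0)) + 1 end) with (INR (S (2*n))).
  change (n+(n+0))%nat with (2*n)%nat.
  rewrite S_INR, mult_INR. simpl (INR 2).
  generalize (sin2_cos2 x); unfold Rsqr; intro H.
  set (c := cos x) in *; set (s := sin x) in *; set (w := c ^ (2*n)) in *.
  nsatz.
Qed.

Lemma bd2 (n : nat) (x : R) : is_derive (fun x => x * (cos x ^ (S (S (2*n)))) + (INR n + 1) * (x * x) * (cos x ^ (S (2*n)) * sin x)) x
   (1 * (cos x ^ (2*n) * cos x * cos x) + (- ((INR n + 1) * (2 * INR n + 1))) * (x * x * cos x ^ (2*n)) + (2 * (INR n + 1) * (INR n + 1)) * (x * x * (cos x ^ (2*n) * cos x * cos x))).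
Proof.
  auto_derive. 1: exact I.
  change (match (n + (n + 0))%nat with | 0%nat => 1 | S _ => INR (n + (n + 0)) + 1 end) with (INR (S (2*n))).
  change (n+(n+0))%nat with (2*n)%nat.
  rewrite ?S_INR, ?mult_INR. simpl (INR 2).
  generalize (sin2_cos2 x); unfold Rsqr; intro H.
  set (c := cos x) in *; set (s := sin x) in *; set (w := c ^ (2*n)) in *.
  nsatz.
Qed.

Ltac req := match goal with |- ?a = ?b => change (@eq R a b) end.

Lemma bftc (F f : R -> R) (a b : R) :
  (forall x, is_derive F x (f x)) -> (forall x, ex_derive f x) ->
  RInt f a b = F b - F a.
Proof.
  intros HF Hf. apply is_RInt_unique.
  apply (is_RInt_derive F f a b).
  - intros x _. apply HF.
  - intros x _. apply (@ex_derive_continuous R_AbsRing R_NormedModule). apply Hf.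
Qed.

Lemma bRInt_lin2 (f g : R->R) a b al be : ex_RInt f a b -> ex_RInt g a b ->
  RInt (fun x => al * f x + be * g x) a b = al * RInt f a b + be * RInt g a b.
Proof.
  intros Hf Hg. apply is_RInt_unique.
  apply (is_RInt_ext (V:=R_CompleteNormedModule) (fun x => plus (scal al (f x)) (scal be (g x)))).
  { intros; reflexivity. }
  apply (is_RInt_plus (V:=R_NormedModule)); apply (is_RInt_scal (V:=R_NormedModule)); apply (RInt_correct (V:=R_CompleteNormedModule)); assumption.
Qed.

Lemma bRInt_lin3 (f g h : R->R) a b al be ga : ex_RInt f a b -> ex_RInt g a b -> ex_RInt h a b ->
  RInt (fun x => al * f x + be * g x + ga * h x) a b = al * RInt f a b + be * RInt g a b + ga * RInt h a b.
Proof.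
  intros Hf Hg Hh. apply is_RInt_unique.
  apply (is_RInt_ext (V:=R_CompleteNormedModule) (fun x => plus (plus (scal al (f x)) (scal be (g x))) (scal ga (h x)))).
  { intros; reflexivity. }
  apply (is_RInt_plus (V:=R_NormedModule)). apply (is_RInt_plus (V:=R_NormedModule)).
  all: apply (is_RInt_scal (V:=R_NormedModule)); apply (RInt_correct (V:=R_CompleteNormedModule)); assumption.
Qed.

Definition bI (n : nat) : R := RInt (fun x => cos x ^ (2*n)) 0 (PI/2).
Definition bJ (n : nat) : R := RInt (fun x => x * x * cos x ^ (2*n)) 0 (PI/2).

Lemma bexI n : ex_RInt (fun x => cos x ^ (2*n)) 0 (PI/2).
Proof. apply (ex_RInt_continuous (V:=R_CompleteNormedModule)). intros z _. apply (@ex_derive_continuous R_AbsRing R_NormedModule). auto_derive. exact I. Qed.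
Lemma bexJ n : ex_RInt (fun x => x * x * cos x ^ (2*n)) 0 (PI/2).
Proof. apply (ex_RInt_continuous (V:=R_CompleteNormedModule)). intros z _. apply (@ex_derive_continuous R_AbsRing R_NormedModule). auto_derive. exact I. Qed.

Lemma bpowS2 n x : cos x ^ (2 * S n) = cos x ^ (2*n) * cos x * cos x.
Proof. replace (2 * S n)%nat with (S (S (2*n))) by lia. simpl. ring. Qed.

Lemma bwallis n : (2 * INR n + 2) * bI (S n) = (2 * INR n + 1) * bI n.
Proof.
  assert (H := bftc _ _ 0 (PI/2) (bd1 n) (ltac:(intros x; auto_derive; exact I))).
  cbv beta in H. rewrite cos_PI2, sin_0 in H. rewrite pow_ne_zero in H by lia.
  assert (H' : RInt (fun x : R => (2 * INR n + 2) * (cos x ^ (2 * n) * cos x * cos x) +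
     (- (2 * INR n + 1)) * cos x ^ (2 * n)) 0 (PI / 2) = 0).
  { rewrite Rmult_0_l, Rmult_0_r, Rminus_0_r in H. etransitivity; [|exact H].
    apply (RInt_ext (V:=R_CompleteNormedModule)). intros. match goal with |- ?a = ?b => change (@eq R a b) end; ring. }
  rewrite bRInt_lin2 in H'.
  2: { apply (ex_RInt_ext (V:=R_CompleteNormedModule) (fun x => cos x ^ (2 * S n))). intros; apply bpowS2. apply bexI. }
  2: apply bexI.
  unfold bI. rewrite (RInt_ext (V:=R_CompleteNormedModule) (fun x => cos x ^ (2 * S n)) (fun x => cos x ^ (2*n) * cos x * cos x)).
  2: intros; apply bpowS2. unfold bI in *. lra.
Qed.

Lemma bmain n : bI (S n) - (INR n + 1) * (2 * INR n + 1) * bJ n + 2 * (INR n + 1) * (INR n + 1) * bJ (S n) = 0.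
Proof.
  assert (H := bftc _ _ 0 (PI/2) (bd2 n) (ltac:(intros x; auto_derive; exact I))).
  cbv beta in H. rewrite cos_PI2, sin_0 in H. rewrite !pow_ne_zero in H by lia.
  assert (exI' : ex_RInt (fun x => cos x ^ (2*n) * cos x * cos x) 0 (PI/2)).
  { apply (ex_RInt_ext (V:=R_CompleteNormedModule) (fun x => cos x ^ (2 * S n))). intros; apply bpowS2. apply bexI. }
  assert (exJ' : ex_RInt (fun x => x * x * (cos x ^ (2*n) * cos x * cos x)) 0 (PI/2)).
  { apply (ex_RInt_ext (V:=R_CompleteNormedModule) (fun x => x * x * cos x ^ (2 * S n))). intros; req; rewrite bpowS2; ring. apply bexJ. }
  rewrite bRInt_lin3 in H; [| exact exI' | apply bexJ | exact exJ'].
  unfold bI, bJ.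
  rewrite (RInt_ext (V:=R_CompleteNormedModule) (fun x => cos x ^ (2 * S n)) (fun x => cos x ^ (2*n) * cos x * cos x)).
  2: intros; apply bpowS2.
  rewrite (RInt_ext (V:=R_CompleteNormedModule) (fun x => x * x * cos x ^ (2 * S n)) (fun x => x * x * (cos x ^ (2*n) * cos x * cos x))).
  2: intros; req; rewrite bpowS2; ring.
  lra.
Qed.

Lemma bI0 : bI 0 = PI / 2.
Proof.
  unfold bI. simpl. rewrite (bftc (fun x => x) (fun _ => 1)). lra.
  intros; auto_derive; [exact I| ring]. intros; auto_derive; exact I.
Qed.

Lemma bJ0 : bJ 0 = PI ^ 3 / 24.
Proof.
  unfold bJ. rewrite (bftc (fun x => x * x * x / 3) (fun x => x * x * cos x ^ (2*0))). field.
  intros; auto_derive; [exact I| simpl; field]. intros; auto_derive; exact I.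
Qed.

Lemma bIpos n : 0 < bI n.
Proof.
  induction n.
  - rewrite bI0. generalize PI_RGT_0; lra.
  - generalize (bwallis n); intro H. generalize (pos_INR n); intro.
    assert (bI (S n) = (2 * INR n + 1) / (2 * INR n + 2) * bI n).
    { apply (Rmult_eq_reg_l (2*INR n+2)); [|lra]. rewrite H. field. lra. }
    rewrite H1. apply Rmult_lt_0_compat; [apply Rdiv_lt_0_compat|]; lra.
Qed.

Lemma bJnn n : 0 <= bJ n.
Proof.
  unfold bJ. apply RInt_ge_0. generalize PI_RGT_0; lra. apply bexJ.
  intros x _. apply Rmult_le_pos. nra. rewrite pow_mult. apply pow_le. nra.
Qed.

Fixpoint S2 (n : nat) : R := match n with O => 0 | S m => S2 m + / (INR (S m) * INR (S m)) end.

Lemma bstep n : / (INR (S n) * INR (S n)) = 2 * (bJ n / bI n - bJ (S n) / bI (S n)).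
Proof.
  generalize (bwallis n) (bmain n) (bIpos n) (bIpos (S n)) (pos_INR n). intros W M P0 P1 Hn.
  rewrite S_INR.
  assert (bJ (S n) = ((INR n + 1) * (2 * INR n + 1) * bJ n - bI (S n)) / (2 * (INR n + 1) * (INR n + 1))).
  { apply (Rmult_eq_reg_l (2 * (INR n + 1) * (INR n + 1))); [|nra]. field_simplify; [lra|lra]. }
  rewrite H.
  assert (bI (S n) = (2 * INR n + 1) / (2 * INR n + 2) * bI n).
  { apply (Rmult_eq_reg_l (2*INR n+2)); [|lra]. rewrite W. field. lra. }
  rewrite H0. field. repeat split; lra.
Qed.

Lemma basel_le n : S2 n <= PI ^ 2 / 6.
Proof.
  assert (forall m, S2 m = 2 * (bJ 0 / bI 0 - bJ m / bI m)).
  { induction m. simpl. ring. change (S2 (S m)) with (S2 m + / (INR (S m) * INR (S m))). rewrite IHm, bstep. ring. }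
  rewrite H, bJ0, bI0. generalize (bJnn n) (bIpos n) PI_RGT_0. intros.
  assert (0 <= bJ n / bI n) by (apply Rdiv_le_0_compat; lra).
  replace (PI ^ 3 / 24 / (PI / 2)) with (PI^2/12) by (field; lra). lra.
Qed.

Open Scope nat_scope.
Open Scope bool_scope.
Ltac mf x k := pose proof (Nat.div_mod_eq x k); pose proof (Nat.mod_upper_bound x k ltac:(lia)).



Definition cnt (P : nat -> bool) (a n : nat) : nat := length (filter P (seq a n)).

Lemma cnt_add P a n m : cnt P a (n + m) = cnt P a n + cnt P (a + n) m.
Proof. unfold cnt. rewrite seq_app, filter_app, length_app. reflexivity. Qed.

Lemma cnt_one P a : cnt P a 1 = if P a then 1 else 0.
Proof. unfold cnt. simpl. destruct (P a); reflexivity. Qed.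

Lemma cnt_S P a n : cnt P a (S n) = cnt P a n + (if P (a + n) then 1 else 0).
Proof. rewrite <- Nat.add_1_r, cnt_add, cnt_one. reflexivity. Qed.

Lemma cnt_0 P a : cnt P a 0 = 0.
Proof. reflexivity. Qed.

Lemma cnt_le_len P a n : cnt P a n <= n.
Proof. induction n. rewrite !cnt_0; lia. rewrite cnt_S. destruct (P (a+n)); lia. Qed.

Lemma cnt_mono P Q a n : (forall k, a <= k < a + n -> P k = true -> Q k = true) -> cnt P a n <= cnt Q a n.
Proof.
  induction n; intros H. rewrite !cnt_0; lia.
  rewrite !cnt_S. assert (IH := IHn (fun k Hk => H k ltac:(lia))).
  specialize (H (a+n) ltac:(lia)). destruct (P (a+n)), (Q (a+n)); try lia. all: specialize (H eq_refl); discriminate.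
Qed.

Lemma cnt_ext P Q a n : (forall k, a <= k < a + n -> P k = Q k) -> cnt P a n = cnt Q a n.
Proof.
  induction n; intros H. reflexivity.
  rewrite !cnt_S. rewrite IHn by (intros; apply H; lia). rewrite (H (a+n)) by lia. reflexivity.
Qed.

Lemma cnt_or P Q a n : cnt (fun k => P k || Q k) a n <= cnt P a n + cnt Q a n.
Proof. induction n. rewrite !cnt_0; lia. rewrite !cnt_S. destruct (P (a+n)), (Q (a+n)); simpl; lia. Qed.

Lemma cnt_split P Q a n : cnt P a n = cnt (fun k => P k && Q k) a n + cnt (fun k => P k && negb (Q k)) a n.
Proof. induction n. reflexivity. rewrite !cnt_S. destruct (P (a+n)), (Q (a+n)); simpl; lia. Qed.

Lemma cnt_len_mono P a n m : n <= m -> cnt P a n <= cnt P a m.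
Proof. intros H. replace m with (n + (m - n)) by lia. rewrite cnt_add. lia. Qed.

Lemma cnt_shift P a n : cnt P a n = cnt (fun k => P (a + k)) 0 n.
Proof. induction n. reflexivity. rewrite !cnt_S, IHn. reflexivity. Qed.

Lemma cnt_window P T a : (forall k, P (k + T) = P k) -> cnt P a T = cnt P 0 T.
Proof.
  intros HP. induction a. reflexivity.
  rewrite <- IHa.
  assert (E1 := cnt_add P a 1 T). assert (E2 := cnt_add P a T 1).
  rewrite Nat.add_comm in E2. rewrite E2 in E1.
  rewrite !cnt_one in E1. rewrite HP in E1.
  rewrite Nat.add_1_r in E1. lia.
Qed.

Lemma cnt_periods P T a k : (forall m, P (m + T) = P m) -> cnt P a (k * T) = k * cnt P 0 T.
Proof.
  intros HP. revert a. induction k; intros a. reflexivity.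
  simpl. rewrite cnt_add, IHk, cnt_window by exact HP. lia.
Qed.

Lemma cnt_upper P T a n : 0 < T -> (forall m, P (m + T) = P m) -> cnt P a n <= (n / T + 1) * cnt P 0 T.
Proof.
  intros HT HP. rewrite <- (cnt_periods P T a) by exact HP. apply cnt_len_mono.
  mf n T. nia.
Qed.

Lemma cnt_eq_lt c q : q <= c -> cnt (fun k => k =? c) 0 q = 0.
Proof.
  induction q; intros H. reflexivity. rewrite cnt_S, IHq by lia. simpl.
  destruct (q =? c) eqn:E. apply Nat.eqb_eq in E. lia. reflexivity.
Qed.

Lemma cnt_eq_one c q : c < q -> cnt (fun k => k =? c) 0 q = 1.
Proof.
  induction q; intros H. lia. rewrite cnt_S. simpl.
  destruct (Nat.eq_dec c q).
  - subst. rewrite cnt_eq_lt by lia. rewrite Nat.eqb_refl. reflexivity.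
  - rewrite IHq by lia. destruct (q =? c) eqn:E. apply Nat.eqb_eq in E. lia. reflexivity.
Qed.

Lemma mod_add_T k q : (k + q) mod q = k mod q.
Proof. rewrite <- (Nat.mul_1_l q) at 1. apply Nat.Div0.mod_add. Qed.

Lemma cnt_mod_one c q : c < q -> cnt (fun k => k mod q =? c) 0 q = 1.
Proof.
  intros H. rewrite <- (cnt_eq_one c q H). apply cnt_ext. intros k Hk. rewrite Nat.mod_small by lia. reflexivity.
Qed.

Lemma cnt_mult_le q a n : 0 < q -> cnt (fun k => k mod q =? 0) a n <= n / q + 1.
Proof.
  intros Hq. eapply Nat.le_trans. apply (cnt_upper _ q). lia.
  intros m. simpl. rewrite mod_add_T. reflexivity.
  rewrite cnt_mod_one by lia. lia.
Qed.

Fixpoint sumr (f : nat -> nat) (q : nat) : nat :=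
  match q with 0 => 0 | S q' => sumr f q' + f q' end.

Lemma sumr_plus f g q : sumr (fun r => f r + g r) q = sumr f q + sumr g q.
Proof. induction q; simpl; lia. Qed.

Lemma sumr_ext f g q : (forall r, r < q -> f r = g r) -> sumr f q = sumr g q.
Proof. induction q; intros H; simpl. reflexivity. rewrite IHq by (intros; apply H; lia). rewrite H by lia. reflexivity. Qed.

Lemma sumr_const c q : sumr (fun _ => c) q = q * c.
Proof. induction q; simpl; lia. Qed.

Lemma sumr_ind (b : bool) k q : sumr (fun r => if b && (k =? r) then 1 else 0) q = if b && (k <? q) then 1 else 0.
Proof.
  induction q; simpl. destruct b; reflexivity.
  rewrite IHq. destruct b; simpl; [|reflexivity].
  destruct (Nat.ltb_spec k q), (Nat.ltb_spec k (S q)), (Nat.eqb_spec k q); lia.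
Qed.

Lemma cnt_partition P q a n : 0 < q ->
  cnt P a n = sumr (fun r => cnt (fun m => P m && (m mod q =? r)) a n) q.
Proof.
  intros Hq. induction n. rewrite (sumr_ext _ (fun _ => 0)). rewrite sumr_const, Nat.mul_0_r. reflexivity. intros; reflexivity.
  rewrite cnt_S.
  rewrite (sumr_ext _ (fun r => cnt (fun m => P m && (m mod q =? r)) a n + (if P (a+n) && ((a+n) mod q =? r) then 1 else 0))).
  2: { intros r _. rewrite cnt_S. reflexivity. }
  rewrite sumr_plus, <- IHn, sumr_ind.
  assert ((a + n) mod q <? q = true) by (apply Nat.ltb_lt, Nat.mod_upper_bound; lia).
  rewrite H. destruct (P (a+n)); reflexivity.
Qed.

Definition cop6 (d : nat) : bool := negb (d mod 2 =? 0) && negb (d mod 3 =? 0).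
Definition D6 (P : nat) : list nat := filter cop6 (seq 2 P).
Definition Kp (P : nat) : nat := fold_right Nat.mul 1 (D6 P).
Definition Lp (P : nat) : nat := Kp P * Kp P.
Definition Hs (P : nat) (m : nat) : bool := forallb (fun d => negb (m mod (d*d) =? 0)) (D6 P).
Definition adm (r : nat) : bool := negb (r mod 4 =? 0) && negb (r mod 9 =? 0).
Definition Gs (P : nat) (m : nat) : bool := Hs P m && adm m.

Lemma prod_mod6 l : (forall d, In d l -> cop6 d = true) ->
  fold_right Nat.mul 1 l mod 6 = 1 \/ fold_right Nat.mul 1 l mod 6 = 5.
Proof.
  induction l as [|d l IH]; intros H. simpl. left; reflexivity.
  cbn [fold_right]. rewrite Nat.Div0.mul_mod.
  assert (Hd := H d (or_introl eq_refl)). unfold cop6 in Hd.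
  apply andb_true_iff in Hd. destruct Hd as [H2 H3].
  apply negb_true_iff, Nat.eqb_neq in H2. apply negb_true_iff, Nat.eqb_neq in H3.
  assert (d mod 6 = 1 \/ d mod 6 = 5) by (mf d 6; mf d 2; mf d 3; lia).
  destruct IH as [E|E]. intros; apply H; right; assumption.
  all: rewrite E; destruct H0 as [E'|E']; rewrite E'; simpl; auto.
Qed.

Lemma Kp_mod6 P : Kp P mod 6 = 1 \/ Kp P mod 6 = 5.
Proof. apply prod_mod6. intros d Hd. unfold D6 in Hd. apply filter_In in Hd. apply Hd. Qed.

Lemma Kp_pos P : 0 < Kp P.
Proof. generalize (Kp_mod6 P). intros [E|E]; destruct (Kp P); simpl in E; try discriminate; lia. Qed.

Lemma mod36_cube_aux k0 : k0 < 36 -> k0 mod 6 = 1 \/ k0 mod 6 = 5 ->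
  let l0 := (k0 * k0) mod 36 in ((l0 * l0) mod 36 * l0) mod 36 = 1.
Proof.
  intros H1 H2.
  do 36 (destruct k0 as [|k0]; [vm_compute in H2; vm_compute; intuition discriminate|]). lia.
Qed.

Lemma Lp_cube P : (Lp P * Lp P * Lp P) mod 36 = 1.
Proof.
  unfold Lp. set (K := Kp P).
  assert (HK : K mod 36 mod 6 = 1 \/ K mod 36 mod 6 = 5).
  { assert (E : K mod 36 mod 6 = K mod 6). { mf K 36; mf (K mod 36) 6; mf K 6. lia. }
    rewrite E. apply Kp_mod6. }
  assert (H := mod36_cube_aux (K mod 36) (Nat.mod_upper_bound K 36 ltac:(lia)) HK). cbv zeta in H.
  rewrite (Nat.Div0.mul_mod (K * K * (K * K)) (K * K)). rewrite (Nat.Div0.mul_mod (K * K) (K * K)).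
  rewrite !(Nat.Div0.mul_mod K K). exact H.
Qed.

Lemma in_prod_div d l : In d l -> Nat.divide d (fold_right Nat.mul 1 l).
Proof.
  induction l; simpl; intros H. destruct H.
  destruct H as [<-|H]. apply Nat.divide_mul_l, Nat.divide_refl.
  apply Nat.divide_mul_r, IHl, H.
Qed.

Lemma D6_sq_div P d : In d (D6 P) -> exists e, Lp P = e * (d * d).
Proof.
  intros H. destruct (in_prod_div d _ H) as [e He].
  exists (e * e). unfold Lp, Kp. rewrite He. ring.
Qed.

Lemma forallb_ext_in {A} (f g : A -> bool) l : (forall x, In x l -> f x = g x) -> forallb f l = forallb g l.
Proof.
  induction l; simpl; intros H. reflexivity.
  rewrite H by auto. rewrite IHl by auto. reflexivity.
Qed.

Lemma Hs_per P m : Hs P (m + Lp P) = Hs P m.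
Proof.
  unfold Hs. apply forallb_ext_in. intros d Hd. destruct (D6_sq_div P d Hd) as [e He].
  rewrite He, Nat.Div0.mod_add. reflexivity.
Qed.

Lemma Hs_perk P m k : Hs P (m + k * Lp P) = Hs P m.
Proof.
  induction k. rewrite Nat.add_0_r; reflexivity.
  replace (m + S k * Lp P) with (m + k * Lp P + Lp P) by lia. rewrite Hs_per. exact IHk.
Qed.

Lemma mod36_class m r : r < 36 -> m mod 36 = r -> m mod 4 = r mod 4 /\ m mod 9 = r mod 9.
Proof. intros. mf m 36; mf m 4; mf m 9; mf r 4; mf r 9. lia. Qed.

Lemma adm_per m k : adm (m + k * 36) = adm m.
Proof.
  unfold adm. replace (m + k * 36) with (m + (9*k) * 4) by lia. rewrite Nat.Div0.mod_add.
  replace (m + 9 * k * 4) with (m + (4*k) * 9) by lia. rewrite Nat.Div0.mod_add. reflexivity.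
Qed.

Lemma equi (H : nat -> bool) L r : 0 < L -> (forall m k, H (m + k * L) = H m) ->
  (L * L * L) mod 36 = 1 -> r < 36 ->
  cnt (fun m => H m && (m mod 36 =? r)) 0 (36 * L) = cnt H 0 L.
Proof.
  intros HL HP HC Hr.
  set (f := fun r => cnt (fun m => H m && (m mod 36 =? r)) 0 (36 * L)).
  assert (Hper : forall r m, H (m + 36 * L) && ((m + 36 * L) mod 36 =? r) = H m && (m mod 36 =? r)).
  { intros r' m. rewrite HP, (Nat.mul_comm 36 L), Nat.Div0.mod_add. reflexivity. }
  assert (Hall : forall r, r < 36 -> f r = f 0).
  { intros r' Hr'. unfold f.
    rewrite <- (cnt_window _ _ (r' * (L * L) * L)) by apply Hper.
    rewrite cnt_shift. apply cnt_ext. intros k _. cbv beta.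
    assert (E : (r' * (L * L) * L) mod 36 = r').
    { replace (r' * (L * L) * L) with (r' * (L * L * L)) by ring.
      rewrite Nat.Div0.mul_mod, HC, Nat.mul_1_r, Nat.Div0.mod_mod. apply Nat.mod_small, Hr'. }
    replace (r' * (L * L) * L + k) with (k + (r' * (L * L)) * L) by ring.
    rewrite HP. f_equal. rewrite Nat.Div0.add_mod, E.
    assert (k mod 36 < 36) by (apply Nat.mod_upper_bound; lia).
    destruct (Nat.eqb_spec ((k mod 36 + r') mod 36) r'), (Nat.eqb_spec (k mod 36) 0); try reflexivity.
    - exfalso. apply n. mf (k mod 36 + r') 36. lia.
    - exfalso. apply n. rewrite e. apply Nat.mod_small, Hr'. }
  assert (Hsum : cnt H 0 (36 * L) = 36 * f 0).
  { rewrite (cnt_partition H 36) by lia. fold f.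
    rewrite (sumr_ext _ (fun _ => f 0)) by exact Hall. apply sumr_const. }
  assert (Hp : cnt H 0 (36 * L) = 36 * cnt H 0 L).
  { apply cnt_periods. intros m. rewrite <- (HP m 1). f_equal. lia. }
  change (f r = cnt H 0 L). rewrite (Hall r Hr). lia.
Qed.

Lemma Lp_pos P : 0 < Lp P.
Proof. unfold Lp. generalize (Kp_pos P). nia. Qed.

Lemma cnt_false a n : cnt (fun _ => false) a n = 0.
Proof. induction n. reflexivity. rewrite cnt_S, IHn. reflexivity. Qed.

Lemma adm_class m r : r < 36 -> m mod 36 = r -> adm m = adm r.
Proof. intros Hr E. destruct (mod36_class m r Hr E) as [E4 E9]. unfold adm. rewrite E4, E9. reflexivity. Qed.

Lemma sumr_adm c : sumr (fun r => if adm r then c else 0) 36 = 24 * c.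
Proof.
  cbn [sumr].
  repeat match goal with |- context [adm ?k] => let v := eval vm_compute in (adm k) in change (adm k) with v end.
  cbv iota. lia.
Qed.

Lemma cG_eq P : cnt (Gs P) 0 (36 * Lp P) = 24 * cnt (Hs P) 0 (Lp P).
Proof.
  rewrite (cnt_partition (Gs P) 36) by lia.
  rewrite (sumr_ext _ (fun r => if adm r then cnt (Hs P) 0 (Lp P) else 0)).
  - apply sumr_adm.
  - intros r Hr.
    rewrite (cnt_ext _ (fun m => adm r && (Hs P m && (m mod 36 =? r)))).
    + destruct (adm r).
      * cbv beta iota. rewrite (cnt_ext _ (fun m => Hs P m && (m mod 36 =? r))) by (intros; reflexivity). apply equi. apply Lp_pos. apply Hs_perk. apply Lp_cube. exact Hr.
      * rewrite (cnt_ext _ (fun _ => false)) by (intros; reflexivity). apply cnt_false.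
    + intros k _. unfold Gs. destruct (Nat.eqb_spec (k mod 36) r).
      * rewrite (adm_class k r Hr e). destruct (Hs P k), (adm r); reflexivity.
      * destruct (Hs P k), (adm k), (adm r); reflexivity.
Qed.

Definition sqfree_b (s : nat) : Prop := forall d, 2 <= d -> s mod (d * d) <> 0.

Lemma decomp n : 1 <= n -> exists k s, 1 <= k /\ n = k * k * s /\ sqfree_b s.
Proof.
  induction n as [n IH] using lt_wf_ind. intros Hn.
  destruct (classic (exists d, 2 <= d /\ n mod (d * d) = 0)) as [[d [Hd Hm]]|Hno].
  - apply Nat.Div0.mod_divides in Hm. destruct Hm as [n' Hn'].
    assert (1 <= n') by (destruct n'; nia).
    assert (4 <= d * d) by nia. assert (n' < n) by (rewrite Hn'; nia).
    destruct (IH n' H1 H) as [k [s [Hk [E Hs]]]].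
    exists (d * k), s. split. nia. split. rewrite Hn', E. ring. exact Hs.
  - exists 1, n. split. lia. split. lia. intros d Hd Hm. apply Hno. exists d. auto.
Qed.

Lemma sqfree_Gs P s : 1 <= s -> sqfree_b s -> Gs P s = true.
Proof.
  intros H1 Hq. unfold Gs, Hs, adm. apply andb_true_iff. split.
  - apply forallb_forall. intros d Hd. unfold D6 in Hd. apply filter_In in Hd. destruct Hd as [Hd _].
    apply in_seq in Hd. apply negb_true_iff, Nat.eqb_neq. apply Hq. lia.
  - apply andb_true_iff. split; apply negb_true_iff, Nat.eqb_neq; [apply (Hq 2)|apply (Hq 3)]; lia.
Qed.

Fixpoint sumk (f : nat -> nat) (m : nat) : nat :=
  match m with 0 => 0 | S m' => sumk f m' + f (S m') end.

Lemma sumk_ext f g m : (forall k, f k = g k) -> sumk f m = sumk g m.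
Proof. intros H. induction m; simpl. reflexivity. rewrite IHm, H. reflexivity. Qed.

Lemma len_flat_map_seq {B} (f : nat -> list B) m :
  length (flat_map f (seq 1 m)) = sumk (fun k => length (f k)) m.
Proof.
  induction m. reflexivity.
  rewrite seq_S, flat_map_app, length_app, IHm. simpl. rewrite app_nil_r. reflexivity.
Qed.

Lemma inj_count P m : m * m <= sumk (fun k => cnt (Gs P) 1 (m * m / (k * k))) m.
Proof.
  set (pairs := flat_map (fun k => map (fun s => (k, s)) (filter (Gs P) (seq 1 (m * m / (k * k))))) (seq 1 m)).
  assert (Hl : length pairs = sumk (fun k => cnt (Gs P) 1 (m * m / (k * k))) m).
  { unfold pairs. rewrite len_flat_map_seq. apply sumk_ext. intros k. rewrite length_map. reflexivity. }
  assert (Hmap : length (map (fun p => fst p * fst p * snd p) pairs) = length pairs) by apply length_map.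
  rewrite <- Hl, <- Hmap.
  replace (m * m) with (length (seq 1 (m * m))) at 1 by apply length_seq.
  apply NoDup_incl_length. apply seq_NoDup.
  intros n Hn. apply in_seq in Hn.
  destruct (decomp n ltac:(lia)) as [k [s [Hk [E Hq]]]].
  assert (1 <= s) by (destruct s; nia).
  assert (k <= m) by nia.
  apply in_map_iff. exists (k, s). split. simpl. lia.
  unfold pairs. apply in_flat_map. exists k. split. apply in_seq. lia.
  apply in_map_iff. exists s. split. reflexivity.
  apply filter_In. split. apply in_seq. split. lia.
  assert (s <= m * m / (k * k)). { apply Nat.div_le_lower_bound. nia. nia. } lia.
  apply sqfree_Gs; assumption.
Qed.

Lemma Qset_adm r : r < 36 -> r mod 4 = 0 \/ r mod 9 = 0 -> In r Qset.
Proof.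
  intros Hr H.
  do 36 (destruct r as [|r]; [first [ (simpl in H; lia) | (simpl; repeat (first [left; reflexivity | right])) ] |]).
  lia.
Qed.

Lemma cnt_shift_le (P Q : nat -> bool) b M : (forall n, n < M -> P n = true -> Q (n + b) = true) ->
  cnt P 0 M <= cnt Q b M.
Proof.
  intros H. rewrite (cnt_shift Q). apply cnt_mono. intros k Hk Pk. rewrite Nat.add_comm. apply H; [lia|exact Pk].
Qed.

Definition tailb (l : list nat) (m : nat) : bool := existsb (fun d => m mod (d * d) =? 0) l.

Definition tsum (M : nat) (l : list nat) : nat := fold_right (fun d acc => M / (d * d) + 1 + acc) 0 l.

Lemma cnt_tail l b M : (forall d, In d l -> 0 < d) -> cnt (tailb l) b M <= tsum M l.
Proof.
  induction l as [|d l IH]; intros Hl.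
  - unfold tailb. simpl. rewrite cnt_false. lia.
  - eapply Nat.le_trans. 2: { simpl. apply Nat.add_le_mono. apply (cnt_mult_le (d*d) b M). 
      assert (0 < d) by (apply Hl; left; reflexivity). nia. apply IH. intros; apply Hl; right; assumption. }
    rewrite (cnt_ext _ (fun m => (m mod (d*d) =? 0) || tailb l m)) by (intros; reflexivity).
    apply cnt_or.
Qed.

Definition Kr (P r : nat) (m : nat) : bool := (m mod 36 =? r) && negb (Hs P m).

Lemma Kr_per P r m : Kr P r (m + 36 * Lp P) = Kr P r m.
Proof.
  unfold Kr. rewrite Hs_perk. rewrite (Nat.mul_comm 36 (Lp P)), Nat.Div0.mod_add. reflexivity.
Qed.

Lemma Kr_count P r : r < 36 -> cnt (Kr P r) 0 (36 * Lp P) + cnt (Hs P) 0 (Lp P) = Lp P.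
Proof.
  intros Hr.
  assert (E1 := cnt_split (fun m => m mod 36 =? r) (Hs P) 0 (36 * Lp P)).
  assert (E2 : cnt (fun m => m mod 36 =? r) 0 (36 * Lp P) = Lp P).
  { rewrite Nat.mul_comm. rewrite cnt_periods. rewrite cnt_mod_one by exact Hr. lia.
    intros m. rewrite mod_add_T. reflexivity. }
  assert (E3 : cnt (fun k => (k mod 36 =? r) && Hs P k) 0 (36 * Lp P) = cnt (Hs P) 0 (Lp P)).
  { rewrite <- (equi (Hs P) (Lp P) r). apply cnt_ext. intros; apply andb_comm.
    apply Lp_pos. apply Hs_perk. apply Lp_cube. exact Hr. }
  unfold Kr. lia.
Qed.

Lemma key_impl P r b M m : r < 36 -> r mod 4 <> 0 -> r mod 9 <> 0 -> 0 < m -> m < b + M ->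
  m mod 36 = r -> ~ squarefree m ->
  (Kr P r m || tailb (seq (S P) (Nat.sqrt (b + M) - P)) m) = true.
Proof.
  intros Hr H4 H9 Hm0 HmM Hmr Hns.
  assert (Hex : exists d, Nat.divide (d * d) m /\ d <> 1).
  { apply NNPP. intros Hno. apply Hns. split. exact Hm0. intros d Hd.
    apply NNPP. intros Hd1. apply Hno. exists d. auto. }
  destruct Hex as [d [Hdm Hd1]].
  assert (Hd0 : d <> 0). { intros ->. destruct Hdm as [z Hz]. lia. }
  assert (Hmod : m mod (d * d) = 0) by (apply Nat.Lcm0.mod_divide; exact Hdm).
  assert (Hle : d * d <= m) by (apply Nat.divide_pos_le; assumption).
  assert (HD : d <= Nat.sqrt (b + M)).
  { rewrite <- (Nat.sqrt_square d). apply Nat.sqrt_le_mono. lia. }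
  destruct (mod36_class m r Hr Hmr) as [Em4 Em9].
  destruct (le_lt_dec d P) as [HdP|HdP].
  - apply orb_true_intro. left. unfold Kr. apply andb_true_intro. split. apply Nat.eqb_eq. exact Hmr.
    apply negb_true_iff. unfold Hs.
    destruct (forallb (fun d0 => negb (m mod (d0 * d0) =? 0)) (D6 P)) eqn:EF; [|reflexivity].
    rewrite forallb_forall in EF.
    destruct (Nat.eq_dec (d mod 2) 0) as [E2|E2].
    + exfalso. apply H4. rewrite <- Em4. apply Nat.Div0.mod_divides in E2. destruct E2 as [e ->].
      destruct Hdm as [z Hz]. rewrite Hz. replace (z * (2 * e * (2 * e))) with (z * e * e * 4) by ring.
      apply Nat.Div0.mod_mul.
    + destruct (Nat.eq_dec (d mod 3) 0) as [E3|E3].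
      * exfalso. apply H9. rewrite <- Em9. apply Nat.Div0.mod_divides in E3. destruct E3 as [e ->].
        destruct Hdm as [z Hz]. rewrite Hz. replace (z * (3 * e * (3 * e))) with (z * e * e * 9) by ring.
        apply Nat.Div0.mod_mul.
      * assert (Hin : In d (D6 P)).
        { unfold D6. apply filter_In. split. apply in_seq. lia.
          unfold cop6. apply andb_true_intro. split; apply negb_true_iff, Nat.eqb_neq; assumption. }
        specialize (EF d Hin). rewrite Hmod in EF. discriminate.
  - apply orb_true_intro. right. unfold tailb. apply existsb_exists. exists d. split.
    apply in_seq. lia. apply Nat.eqb_eq. exact Hmod.
Qed.

Open Scope R_scope.


Lemma nat_above (A : R) : exists m : nat, A < INR m.
Proof.
  destruct (archimed A) as [H1 H2].
  destruct (Z_le_gt_dec (up A) 0) as [Hz|Hz].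
  - exists 0%nat. simpl. apply IZR_le in Hz. lra.
  - exists (Z.to_nat (up A)). rewrite INR_IZR_INZ, Z2Nat.id by lia. lra.
Qed.

Lemma INR_div_le (a b : nat) : (0 < b)%nat -> INR (a / b) <= INR a / INR b.
Proof.
  intros Hb. assert (Hb' : 0 < INR b) by (apply lt_0_INR; lia).
  apply (Rmult_le_reg_r (INR b)). exact Hb'.
  unfold Rdiv. rewrite Rmult_assoc, Rinv_l by lra. rewrite Rmult_1_r.
  rewrite <- mult_INR. apply le_INR. rewrite Nat.mul_comm. apply Nat.Div0.mul_div_le.
Qed.

Fixpoint Rsumk (f : nat -> R) (m : nat) : R :=
  match m with O => 0 | S m' => Rsumk f m' + f (S m') end.

Lemma sumk_le (f : nat -> nat) (g : nat -> R) m : (forall k, (1 <= k)%nat -> INR (f k) <= g k) -> INR (sumk f m) <= Rsumk g m.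
Proof. intros H. induction m; simpl. lra. rewrite plus_INR. specialize (H (S m) ltac:(lia)). lra. Qed.

Lemma Rsumk_S2 (N T c : R) j : Rsumk (fun k => (N / (INR k * INR k) / T + 1) * c) j = c * N / T * S2 j + INR j * c.
Proof.
  induction j. simpl. ring.
  change (Rsumk (fun k => (N / (INR k * INR k) / T + 1) * c) (S j)) with
    (Rsumk (fun k => (N / (INR k * INR k) / T + 1) * c) j + (N / (INR (S j) * INR (S j)) / T + 1) * c).
  change (S2 (S j)) with (S2 j + / (INR (S j) * INR (S j))).
  rewrite IHj. rewrite (S_INR j). unfold Rdiv. ring.
Qed.

Lemma Gs_per P m : Gs P (m + 36 * Lp P) = Gs P m.
Proof.
  unfold Gs. rewrite Hs_perk. rewrite (Nat.mul_comm 36 (Lp P)), adm_per. reflexivity.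
Qed.

Lemma grow_bound (a b : R) : (forall m : nat, (1 <= m)%nat -> INR m * INR m <= a * (INR m * INR m) + b * INR m) -> 1 <= a.
Proof.
  intros H. destruct (Rle_dec 1 a) as [|Ha]; [assumption|]. exfalso.
  apply Rnot_le_lt in Ha.
  destruct (nat_above (Rmax 1 (b / (1 - a)))) as [m Hm].
  assert (Hm1 : 1 < INR m) by (generalize (Rmax_l 1 (b / (1 - a))); lra).
  assert (Hm2 : b / (1 - a) < INR m) by (generalize (Rmax_r 1 (b / (1 - a))); lra).
  assert (Hmn : (1 <= m)%nat). { destruct m. simpl in Hm1. lra. lia. }
  specialize (H m Hmn).
  assert (b < (1 - a) * INR m).
  { apply (Rmult_lt_compat_l (1 - a)) in Hm2; [|lra]. unfold Rdiv in Hm2.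
    rewrite <- Rmult_assoc, (Rmult_comm (1 - a) b), Rmult_assoc, Rinv_r, Rmult_1_r in Hm2 by lra. lra. }
  assert (b * INR m < (1 - a) * INR m * INR m) by (apply Rmult_lt_compat_r; lra).
  lra.
Qed.

Lemma density P : 9 * INR (Lp P) <= INR (cnt (Hs P) 0 (Lp P)) * PI ^ 2.
Proof.
  set (L := Lp P). set (c := cnt (Hs P) 0 L).
  assert (HL : (0 < L)%nat) by apply Lp_pos.
  set (T := (36 * L)%nat). set (cG := cnt (Gs P) 0 T).
  assert (HcG : cG = (24 * c)%nat) by apply cG_eq.
  assert (HT : 0 < INR T) by (apply lt_0_INR; unfold T; lia).
  assert (Hb : forall m : nat, (1 <= m)%nat -> INR m * INR m <= (INR cG / INR T * (PI ^ 2 / 6)) * (INR m * INR m) + INR cG * INR m).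
  { intros m Hm.
    assert (H1 := inj_count P m). apply le_INR in H1. rewrite mult_INR in H1.
    eapply Rle_trans. exact H1.
    eapply Rle_trans. apply (sumk_le _ (fun k => (INR (m * m) / (INR k * INR k) / INR T + 1) * INR cG)).
    - intros k Hk. destruct k as [|k]. lia.
      eapply Rle_trans. apply le_INR. apply (cnt_upper _ T). unfold T; lia. intros; apply Gs_per.
        fold cG. rewrite mult_INR, plus_INR. simpl (INR 1). apply Rmult_le_compat_r. apply pos_INR.
        apply Rplus_le_compat_r.
        eapply Rle_trans. apply INR_div_le. unfold T; lia.
        unfold Rdiv. apply Rmult_le_compat_r. left. apply Rinv_0_lt_compat. exact HT.
        rewrite <- (mult_INR (S k) (S k)). fold (Rdiv (INR (m*m)) (INR (S k * S k))).
        apply INR_div_le. lia.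
    - rewrite Rsumk_S2. rewrite mult_INR.
      assert (HS := basel_le m).
      assert (0 <= INR cG * (INR m * INR m) / INR T).
      { unfold Rdiv. apply Rmult_le_pos; [|left; apply Rinv_0_lt_compat; lra]. apply Rmult_le_pos. apply pos_INR. apply Rmult_le_pos; apply pos_INR. }
      assert (INR cG * (INR m * INR m) / INR T * S2 m <= INR cG * (INR m * INR m) / INR T * (PI ^ 2 / 6)).
      { apply Rmult_le_compat_l; assumption. }
      replace (INR cG / INR T * (PI ^ 2 / 6) * (INR m * INR m)) with (INR cG * (INR m * INR m) / INR T * (PI ^ 2 / 6)) by (field; lra).
      rewrite (Rmult_comm (INR m) (INR cG)). lra. }
  assert (Ha := grow_bound _ _ Hb).
  rewrite HcG in Ha. unfold T in Ha. rewrite !mult_INR in Ha. replace (INR 24) with 24 in Ha by (simpl; ring). replace (INR 36) with 36 in Ha by (simpl; ring).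
  assert (0 < INR L) by (apply lt_0_INR; exact HL).
  apply (Rmult_le_compat_r (6 * (36 * INR L))) in Ha; [|lra].
  replace (24 * INR c / (36 * INR L) * (PI ^ 2 / 6) * (6 * (36 * INR L))) with (24 * INR c * PI ^ 2) in Ha by (field; lra).
  lra.
Qed.

Lemma tsum_bound M t j : (1 <= t)%nat ->
  INR (tsum M (seq (S t) j)) <= INR M * (/ INR t - / INR (t + j)) + INR j.
Proof.
  revert t. induction j; intros t Ht.
  - simpl. rewrite Nat.add_0_r. lra.
  - change (seq (S t) (S j)) with (S t :: seq (S (S t)) j).
    change (tsum M (S t :: seq (S (S t)) j)) with ((M / (S t * S t) + 1 + tsum M (seq (S (S t)) j))%nat).
    rewrite !plus_INR. specialize (IHj (S t) ltac:(lia)).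
    replace (S t + j)%nat with (t + S j)%nat in IHj by lia.
    assert (Ht' : 1 <= INR t) by (apply (le_INR 1); lia).
    assert (H1 : INR (M / (S t * S t)) <= INR M * (/ INR t - / INR (S t))).
    { eapply Rle_trans. apply INR_div_le. lia. rewrite mult_INR, S_INR.
      assert (0 <= INR M) by apply pos_INR.
      unfold Rdiv. apply Rmult_le_compat_l. lra.
      assert (/ (INR t + 1) * / (INR t + 1) <= / INR t - / (INR t + 1)).
      { replace (/ INR t - / (INR t + 1)) with (/ (INR t * (INR t + 1))) by (field; lra).
        rewrite <- Rinv_mult. apply Rinv_le_contravar. nra. nra. }
      rewrite Rinv_mult. lra. }
    simpl (INR 1).
    rewrite (S_INR j). rewrite (plus_INR t (S j)), (S_INR j) in IHj.
    assert (E : INR M * (/ INR t - / INR (S t)) + INR M * (/ INR (S t) - / (INR t + (INR j + 1))) = INR M * (/ INR t - / (INR t + (INR j + 1)))) by ring.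
    lra.
Qed.

Lemma Rdiv_nn (a b : R) : 0 <= a -> 0 < b -> 0 <= a / b.
Proof. intros. unfold Rdiv. apply Rmult_le_pos; [assumption| left; apply Rinv_0_lt_compat; assumption]. Qed.

Lemma final_real (x eps M L c P D T cu pi2 : R) :
  0 < eps -> 1 <= x -> 400 / eps <= x -> 14400 * L / eps <= x -> 3 * 14400 ^ 2 / eps ^ 2 <= x ->
  0 < L -> 0 <= c -> 9 * L <= c * pi2 -> 9 < pi2 -> 28800 / eps < P ->
  0 <= M -> M <= x + 1 -> 0 <= D -> D * D <= 2 * x + 1 -> T <= M * / P + D ->
  cu <= (M / (36 * L) + 1) * (L - c) + T ->
  36 * cu / x <= 1 - 9 / pi2 + eps / 100.
Proof.
  intros He Hx1 Hx2 Hx3 Hx4 HL Hc Hd Hpi HP HM0 HM HD0 HD HT Hcu.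
  assert (HP0 : 0 < P). { assert (0 < 28800 / eps) by (apply Rdiv_lt_0_compat; lra). lra. }
  set (q := 1 - 9 / pi2).
  assert (Hq0 : 0 < q). { unfold q. assert (9 / pi2 < 1). { apply (Rmult_lt_reg_r pi2). lra. field_simplify; lra. } lra. }
  assert (Hq1 : q <= 1). { unfold q. assert (0 <= 9 / pi2) by (apply Rdiv_nn; lra). lra. }
  assert (Hcl : 9 / pi2 <= c / L).
  { apply (Rmult_le_reg_r (pi2 * L)). nra. field_simplify; [|lra|lra]. lra. }
  assert (A1 : (M / (36 * L) + 1) * (L - c) <= M / 36 * q + L).
  { replace ((M / (36 * L) + 1) * (L - c)) with (M / 36 * (1 - c / L) + (L - c)) by (field; lra).
    assert (M / 36 * (1 - c / L) <= M / 36 * q).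
    { apply Rmult_le_compat_l. lra. unfold q. lra. }
    lra. }
  assert (B1 : 36 * L <= eps * x / 400).
  { apply (Rmult_le_compat_r eps) in Hx3; [|lra]. replace (14400 * L / eps * eps) with (14400 * L) in Hx3 by (field; lra). lra. }
  assert (B2 : 1 <= eps * x / 400).
  { apply (Rmult_le_compat_r eps) in Hx2; [|lra]. replace (400 / eps * eps) with 400 in Hx2 by (field; lra). lra. }
  assert (B3 : 36 * (M * / P) <= eps * x / 400).
  { assert (72 / P <= eps / 400).
    { apply (Rmult_le_reg_r P). lra. apply (Rmult_lt_compat_r eps) in HP; [|lra].
      replace (28800 / eps * eps) with 28800 in HP by (field; lra). field_simplify; lra. }
    assert (36 * (M * / P) <= 72 * x / P).
    { unfold Rdiv. rewrite <- Rmult_assoc. apply Rmult_le_compat_r. left; apply Rinv_0_lt_compat; lra. lra. }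
    assert (72 * x / P = x * (72 / P)) by (field; lra).
    assert (x * (72 / P) <= x * (eps / 400)) by (apply Rmult_le_compat_l; lra).
    lra. }
  assert (B4 : 36 * D <= eps * x / 400).
  { set (y := eps * x / 14400).
    assert (Hy : 0 <= y) by (unfold y; apply Rdiv_nn; nra).
    assert (Hxe : 3 * 14400 ^ 2 <= x * eps ^ 2).
    { apply (Rmult_le_compat_r (eps ^ 2)) in Hx4; [|nra]. replace (3 * 14400 ^ 2 / eps ^ 2 * eps ^ 2) with (3 * 14400 ^ 2) in Hx4 by (field; lra). lra. }
    assert (3 * x <= y * y).
    { unfold y. replace (eps * x / 14400 * (eps * x / 14400)) with (x * (x * eps ^ 2) / 14400 ^ 2) by (field; lra).
      assert (x * (3 * 14400 ^ 2) <= x * (x * eps ^ 2)) by (apply Rmult_le_compat_l; lra).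
      apply (Rmult_le_reg_r (14400 ^ 2)). nra. unfold Rdiv. rewrite (Rmult_assoc (x * (x * eps ^ 2))), Rinv_l, Rmult_1_r by nra. lra. }
    assert (D <= y).
    { destruct (Rle_dec D y) as [|Hn]; [assumption|]. apply Rnot_le_lt in Hn. nra. }
    unfold y in *. lra. }
  assert (Hcu2 : 36 * cu <= x * (q + eps / 100)).
  { assert (M * q <= x * q + 1) by nra. nra. }
  apply (Rmult_le_reg_r x). lra. unfold Rdiv at 1. rewrite Rmult_assoc, Rinv_l, Rmult_1_r by lra.
  rewrite (Rmult_comm (q + eps / 100) x). exact Hcu2.
Qed.

Theorem lemma1 :
  forall eps : R, eps > 0 ->
  exists X0 : R, forall (x : R) (A : nat -> bool),
    x >= X0 ->
    subset_1x A x ->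
    INR (cardA A x) > (delta0 + eps) * x ->
    (forall a b : nat, A a = true -> A b = true -> ~ squarefree (a + b)) ->
    (exists n, A n = true /\ (n mod 4 <> 0)%nat) ->
    (exists n, A n = true /\ (n mod 9 <> 0)%nat) ->
    (exists n, A n = true /\ (n mod 4 <> 2)%nat) ->
    forall u v : nat, inU A x eps u -> inV A x v ->
      In ((u + v) mod 36)%nat Qset.
Proof.
  intros eps Heps.
  destruct (nat_above (28800 / eps)) as [P0 HP0].
  set (P := S P0).
  assert (HPr : 28800 / eps < INR P) by (unfold P; rewrite S_INR; lra).
  set (L := Lp P). set (c := cnt (Hs P) 0 L).
  assert (HL : (0 < L)%nat) by apply Lp_pos.
  assert (HLr : 0 < INR L) by (apply lt_0_INR; exact HL).
  exists (1 + 400 / eps + 14400 * INR L / eps + 3 * 14400 ^ 2 / eps ^ 2).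
  intros x A Hx Hsub _ Hsq _ _ _ u v [Hu HU] [Hv HV].
  assert (a1 : 0 <= 400 / eps) by (apply Rdiv_nn; lra).
  assert (a2 : 0 <= 14400 * INR L / eps) by (apply Rdiv_nn; nra).
  assert (a3 : 0 <= 3 * 14400 ^ 2 / eps ^ 2) by (apply Rdiv_nn; nra).
  assert (Hx0 : 0 < x) by lra.
  apply NNPP; intros Hnot.
  set (r := ((u + v) mod 36)%nat) in *.
  assert (Hr : (r < 36)%nat) by (apply Nat.mod_upper_bound; lia).
  assert (H4 : (r mod 4 <> 0)%nat) by (intro E; apply Hnot; apply Qset_adm; auto).
  assert (H9 : (r mod 9 <> 0)%nat) by (intro E; apply Hnot; apply Qset_adm; auto).
  set (M := Z.to_nat (up x)).
  assert (Hcv : (0 < count_res A x v)%nat).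
  { destruct (count_res A x v) eqn:E; [|lia]. unfold delta_res in HV. rewrite E in HV. simpl INR in HV.
    unfold Rdiv in HV. rewrite Rmult_0_r, Rmult_0_l in HV. lra. }
  unfold count_res in Hcv.
  destruct (filter (fun n => A n && Nat.eqb (n mod 36) v) (range_upto x)) as [|b l] eqn:EF.
  { simpl in Hcv. lia. }
  assert (Hb : In b (filter (fun n => A n && Nat.eqb (n mod 36) v) (range_upto x))) by (rewrite EF; left; reflexivity).
  apply filter_In in Hb. destruct Hb as [_ Hb]. apply andb_true_iff in Hb. destruct Hb as [HAb Hbv].
  apply Nat.eqb_eq in Hbv.
  destruct (Hsub b HAb) as [Hb1 Hbx].
  set (D := Nat.sqrt (b + M)).
  set (cu := count_res A x u) in *.
  assert (C1 : (cu <= cnt (fun m => Kr P r m || tailb (seq (S P) (D - P)) m) b M)%nat).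
  { change cu with (cnt (fun n => A n && Nat.eqb (n mod 36) u) 0 M).
    apply cnt_shift_le. intros n Hn Hf. apply andb_true_iff in Hf. destruct Hf as [HAn Hnu].
    apply Nat.eqb_eq in Hnu. destruct (Hsub n HAn) as [Hn1 _].
    apply key_impl; try assumption; try lia.
    unfold r. rewrite (Nat.Div0.add_mod n b), Hnu, Hbv. reflexivity.
    apply Hsq; assumption. }
  assert (C2 := cnt_or (Kr P r) (tailb (seq (S P) (D - P))) b M).
  assert (C3 : (cnt (Kr P r) b M <= (M / (36 * L) + 1) * cnt (Kr P r) 0 (36 * L))%nat).
  { apply cnt_upper. lia. intros m. apply Kr_per. }
  assert (C4 := Kr_count P r Hr). fold L c in C4.
  assert (C5 : (cnt (tailb (seq (S P) (D - P))) b M <= tsum M (seq (S P) (D - P)))%nat).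
  { apply cnt_tail. intros d Hd. apply in_seq in Hd. lia. }
  assert (R1 : INR (tsum M (seq (S P) (D - P))) <= INR M * / INR P + INR D).
  { eapply Rle_trans. apply tsum_bound. unfold P; lia.
    assert (0 <= / INR (P + (D - P))).
    { destruct (P + (D - P))%nat eqn:E. simpl. rewrite Rinv_0. lra. left; apply Rinv_0_lt_compat, lt_0_INR; lia. }
    assert (INR (D - P) <= INR D) by (apply le_INR; lia).
    assert (0 <= INR M) by apply pos_INR. nra. }
  assert (R2 : INR (M / (36 * L)) <= INR M / (36 * INR L)).
  { eapply Rle_trans. apply INR_div_le. lia. rewrite mult_INR. replace (INR 36) with 36 by (simpl; ring). lra. }
  assert (Rcu : INR cu <= (INR M / (36 * INR L) + 1) * (INR L - INR c) + (INR M * / INR P + INR D)).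
  { apply le_INR in C1. apply le_INR in C2. apply le_INR in C3. apply le_INR in C5.
    rewrite plus_INR in C2. rewrite mult_INR, plus_INR in C3. simpl (INR 1) in C3.
    assert (E : INR (cnt (Kr P r) 0 (36 * L)) = INR L - INR c).
    { assert (C4r := f_equal INR C4). rewrite plus_INR in C4r. lra. }
    rewrite E in C3.
    assert (0 <= INR L - INR c). { rewrite <- E. apply pos_INR. }
    assert ((INR (M / (36 * L)) + 1) * (INR L - INR c) <= (INR M / (36 * INR L) + 1) * (INR L - INR c)).
    { apply Rmult_le_compat_r; lra. }
    lra. }
  assert (Hpi : 9 < PI ^ 2). { generalize PI2_3_2. intros. nra. }
  assert (Hden := density P). fold L c in Hden.
  assert (HMx : INR M <= x + 1).
  { destruct (archimed x) as [Ha1 Ha2].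
    assert (Hup : (0 <= up x)%Z). { apply le_IZR. lra. }
    unfold M. rewrite INR_IZR_INZ, Z2Nat.id by exact Hup. lra. }
  assert (HDx : INR D * INR D <= 2 * x + 1).
  { rewrite <- mult_INR. assert (Hs := Nat.sqrt_spec (b + M) ltac:(lia)). fold D in Hs.
    apply proj1 in Hs. apply (le_INR (D * D) (b + M)) in Hs. rewrite plus_INR in Hs. lra. }
  assert (Hfin := final_real x eps (INR M) (INR L) (INR c) (INR P) (INR D)
     (INR M * / INR P + INR D) (INR cu) (PI ^ 2) Heps ltac:(lra) ltac:(lra) ltac:(lra) ltac:(lra)
     HLr (pos_INR c) Hden Hpi HPr (pos_INR M) HMx (pos_INR D) HDx (Rle_refl _) Rcu).
  unfold delta_res in HU. fold cu in HU. lra.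
Qed.
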